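(* Assuming that $\mathcal{P}, \mathcal{Q}$ admit densities, we then obtain \begin{equation} W(\mathcal{P},\mathcal{Q})\leq \sum\limits_{y\in\mathcal{Y}} \check{W}_{y}(\mathcal{P},\mathcal{Q}), \end{equation} where we have a class-weighted joint distribution unbalanced Wasserstein distance $\check{W}_{y}(\mathcal{P},\mathcal{Q})$ defined as $$\check{W}_{y}(\mathcal{P},\mathcal{Q}) = \sup\limits_{\|\varphi_y\|_{Lip}\leq 1} \mathbb{E}_{z\sim\mathcal{P}_\mathcal{Z}}\left[\varphi_y(z,y)\mathcal{P}(Y=y|z)\right]-\mathbb{E}_{z\sim\mathcal{Q}_\mathcal{Z}}\left[\varphi_y(z,y)\mathcal{Q}(Y=y|z)\right].$$
   Context: $\mathcal{Z}\subset\mathbb{R}^d$ is a compact measurable feature space and $\mathcal{Y}$ a finite (discrete) label space; $\mathcal{P},\mathcal{Q}$ are probability distributions on $\mathcal{Z}\times\mathcal{Y}$ (the observed, partially labeled joint distributions of two domains), with marginals $\mathcal{P}_\mathcal{Z},\mathcal{Q}_\mathcal{Z}$ on $\mathcal{Z}$ and conditionals $\mathcal{P}(Y=y|z)$, $\mathcal{Q}(Y=y|z)$. $W$ is the 1-Wasserstein distance with cost the Euclidean metric on $\mathcal{Z}\times\mathcal{Y}$, i.e. $W(\mathcal{P},\mathcal{Q})=\sup_{\|\varphi\|_{Lip}\le 1}\mathbb{E}_{\mathcal{P}}[\varphi]-\mathbb{E}_{\mathcal{Q}}[\varphi]$ (Kantorovich–Rubinstein dual), and $\|\varphi_y\|_{Lip}$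 denotes the Lipschitz constant of $\varphi_y$. *)

(* Defs.v *)
From HB Require Import structures.
From mathcomp Require Import all_boot all_order all_algebra.
From mathcomp Require Import all_classical all_reals all_analysis.
Set Implicit Arguments. Unset Strict Implicit. Unset Printing Implicit Defensive.
Import Order.TTheory GRing.Theory Num.Theory.
Import numFieldNormedType.Exports.
Local Open Scope classical_set_scope.
Local Open Scope ring_scope.

Definition feat (R : realType) (d : nat) :=
  g_sigma_algebraType (@open 'rV[R]_d).

(* Euclidean metric on Z x Y, where labels y are embedded in R^k by lab. *)
Definition eucl_dist (R : realType) (d k : nat) (Y : Type) (lab : Y -> 'rV[R]_k)
  (z1 : 'rV[R]_d) (y1 : Y) (z2 : 'rV[R]_d) (y2 : Y) : R :=
  Num.sqrt (\sum_(i < d) (z1 ord0 i - z2 ord0 i) ^+ 2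
          + \sum_(j < k) (lab y1 ord0 j - lab y2 ord0 j) ^+ 2).

Definition lip1 (R : realType) (d k : nat) (Y : Type) (lab : Y -> 'rV[R]_k)
  (Z : set 'rV[R]_d) (phi : 'rV[R]_d -> Y -> R) : Prop :=
  forall z1 z2 y1 y2, Z z1 -> Z z2 ->
    `|phi z1 y1 - phi z2 y2| <= eucl_dist lab z1 y1 z2 y2.

(* p is a probability density on Z x Y w.r.t. mu (x) counting measure. *)
Definition is_density (R : realType) (d : nat) (Y : finType)
  (mu : {measure set (feat R d) -> \bar R}) (Z : set (feat R d))
  (p : feat R d -> Y -> R) : Prop :=
  [/\ forall z y, 0 <= p z y,
      forall y, measurable_fun Z (fun z => p z y) &
      (\int[mu]_(z in Z) (\sum_(y : Y) p z y)%:E = 1)%E].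

Definition marg (R : realType) (d : nat) (Y : finType) (p : feat R d -> Y -> R)
  (z : feat R d) : R := \sum_(y : Y) p z y.
Definition cond (R : realType) (d : nat) (Y : finType) (p : feat R d -> Y -> R)
  (y : Y) (z : feat R d) : R := p z y / marg p z.

Definition Ejoint (R : realType) (d : nat) (Y : finType)
  (mu : {measure set (feat R d) -> \bar R}) (Z : set (feat R d))
  (p : feat R d -> Y -> R) (phi : 'rV[R]_d -> Y -> R) : \bar R :=
  (\int[mu]_(z in Z) (\sum_(y : Y) phi z y * p z y)%:E)%E.

Definition Emarg (R : realType) (d : nat) (Y : finType)
  (mu : {measure set (feat R d) -> \bar R}) (Z : set (feat R d))
  (p : feat R d -> Y -> R) (g : 'rV[R]_d -> R) : \bar R :=
  (\int[mu]_(z in Z) (g z * marg p z)%:E)%E.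

(* 1-Wasserstein distance (Kantorovich-Rubinstein dual) *)
Definition W1 (R : realType) (d k : nat) (Y : finType) (lab : Y -> 'rV[R]_k)
  (mu : {measure set (feat R d) -> \bar R}) (Z : set (feat R d))
  (p q : feat R d -> Y -> R) : \bar R :=
  ereal_sup [set (Ejoint mu Z p phi - Ejoint mu Z q phi)%E
            | phi in [set phi | lip1 lab Z phi]].

Definition Wcheck (R : realType) (d k : nat) (Y : finType) (lab : Y -> 'rV[R]_k)
  (mu : {measure set (feat R d) -> \bar R}) (Z : set (feat R d))
  (p q : feat R d -> Y -> R) (y : Y) : \bar R :=
  ereal_sup [set (Emarg mu Z p (fun z => (phi z y * cond p y z)%R)
                  - Emarg mu Z q (fun z => (phi z y * cond q y z)%R))%E
            | phi in [set phi | lip1 lab Z phi]].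

(* Main.v *)
Require Import Defs.
From HB Require Import structures.
From mathcomp Require Import all_boot all_order all_algebra.
From mathcomp Require Import all_classical all_reals all_analysis.
From mathcomp Require Import ring lra measurable_realfun.
Import Order.TTheory GRing.Theory Num.Theory.
Import numFieldNormedType.Exports.
Local Open Scope classical_set_scope.
Local Open Scope ring_scope.
Lemma ballent (R : realType) d (z x : 'rV[R]_d) (r : R) i : ball z r x -> `|z ord0 i - x ord0 i| < r.
Proof. move=> [_ H]. have := H ord0 i. rewrite /ball /=. done. Qed.

Lemma lip_meas (R : realType) d (Z : set 'rV[R]_d) (Zm : measurable (Z : set (feat R d))) (f : 'rV[R]_d -> R)
 (Hf : forall z1 z2 (c : R), Z z1 -> Z z2 -> 0 <= c -> (forall i, `|z1 ord0 i - z2 ord0 i| <= c) -> `|f z1 - f z2| <= d.+1%:R * c) :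
 measurable_fun (Z : set (feat R d)) (f : feat R d -> R).
Proof.
apply: (measurability _ (RGenOpens.measurableE R)).
move=> _ [_ [a [b ->]] <-].
pose r z := Num.min (f z - a) (b - f z) / (2 * d.+1%:R).
pose S := Z `&` f @^-1` `]a, b[.
have rpos z : a < f z -> f z < b -> 0 < r z.
  move=> h1 h2; apply: divr_gt0; last by [].
  by rewrite lt_min !subr_gt0 h1 h2.
have -> : Z `&` f @^-1` `]a,b[ = Z `&` \bigcup_(z in S) ball z (r z).
  apply/seteqP; split => x [Zx Hx]; split => //.
  - exists x => //; apply: ballxx.
    by move: Hx; rewrite /= in_itv /= => /andP[h1 h2]; exact: rpos.
  - case: Hx => z [Zz Hz] bx.
    move: Hz; rewrite /= !in_itv /= => /andP[h1 h2].
    have rz := rpos z h1 h2.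
    have := Hf z x (r z) Zz Zx (ltW rz) (fun i => ltW (@ballent _ _ _ _ _ i bx)).
    set m := Num.min (f z - a) (b - f z).
    have m1 : m <= f z - a by rewrite ge_min lexx.
    have m2 : m <= b - f z by rewrite ge_min lexx orbT.
    have e : d.+1%:R * r z = m / 2 by rewrite /r /m; field.
    rewrite e ler_norml => /andP[h3 h4].
    have m0 : 0 < m by rewrite lt_min !subr_gt0 h1 h2.
    apply/andP; split; lra.
apply: measurableI => //; apply: sub_sigma_algebra; apply: bigcup_open => z _; exact: ball_open.
Qed.
Section aux.
Variables (R : realType) (d k : nat) (Y : finType) (lab : Y -> 'rV[R]_k).

Lemma eucl_le (a b : 'rV[R]_d) (y : Y) (c : R) : 0 <= c ->
  (forall i, `|a ord0 i - b ord0 i| <= c) -> eucl_dist lab a y b y <= d.+1%:R * c.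
Proof.
move=> c0 H; rewrite /eucl_dist.
rewrite [X in _ + X]big1 ?addr0; last by move=> j _; rewrite subrr expr0n.
rewrite -(ger0_norm (mulr_ge0 (ler0n _ _) c0)) -sqrtr_sqr ler_sqrt ?sqr_ge0 //.
apply: (@le_trans _ _ (\sum_(i < d) c ^+ 2)).
  apply: ler_sum => i _; have := H i; rewrite ler_norml => /andP[h1 h2]; nra.
rewrite sumr_const card_ord -mulr_natl.
have hd : 0 <= d%:R :> R by [].
have : d%:R <= (d.+1%:R) ^+ 2 :> R.
  by rewrite -natrX ler_nat; apply: (@leq_trans d.+1) => //; rewrite leq_pmull.
rewrite exprMn => h; have := sqr_ge0 c; nra.
Qed.

End aux.

Lemma bnd (R : realType) d (Z : set 'rV[R]_d) : compact Z -> exists M, forall z i, Z z -> `|z ord0 i| <= M.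
Proof.
move=> /compact_bounded [M [Mr HM]].
have ltMM : M < M + 1 by rewrite ltrDl.
exists (M + 2) => z i Zz.
have h := HM (M+1) ltMM z Zz.
have : ball (0 : 'rV[R]_d) (M+2) z.
  rewrite mx_norm_ball /ball_ /= sub0r normrN. move: h; rewrite /= => h. lra.
move=> /(@ballent _ _ _ _ _ i); rewrite mxE sub0r normrN => /ltW //.
Qed.

Lemma lip_bnd (R : realType) d (Z : set 'rV[R]_d) (Zc : compact Z) (f : 'rV[R]_d -> R)
 (Hf : forall z1 z2 (c : R), Z z1 -> Z z2 -> 0 <= c -> (forall i, `|z1 ord0 i - z2 ord0 i| <= c) -> `|f z1 - f z2| <= d.+1%:R * c) :
 exists M, forall z, Z z -> `|f z| <= M.
Proof.
have [M HM] := bnd _ _ _ Zc.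
have [[z0 Z0]|Z0] := pselect (exists z, Z z); last first.
  by exists 0 => z Zz; exfalso; apply: Z0; exists z.
exists (`|f z0| + d.+1%:R * `|2 * M|) => z Zz.
have := Hf z z0 `|2 * M| Zz Z0 (normr_ge0 _).
have H : forall i, `|z ord0 i - z0 ord0 i| <= `|2 * M|.
  move=> i; apply: (le_trans (ler_normB _ _)); apply: (le_trans _ (ler_norm _)).
  have := HM z i Zz; have := HM z0 i Z0; lra.
move=> /(_ H) h.
have := ler_normD (f z - f z0) (f z0); rewrite subrK; lra.
Qed.

Theorem lemma3 (R : realType) (d k : nat) (Y : finType)
  (lab : Y -> 'rV[R]_k) (lab_inj : injective lab)
  (Z : set 'rV[R]_d) (Zcpt : compact Z) (Zmeas : measurable (Z : set (feat R d)))
  (mu : {measure set (feat R d) -> \bar R})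
  (p q : feat R d -> Y -> R)
  (hp : is_density mu Z p) (hq : is_density mu Z q) :
  (W1 lab mu Z p q <= \sum_(y : Y) Wcheck lab mu Z p q y)%E.
Proof.
have intd (r : feat R d -> Y -> R) : is_density mu Z r ->
    forall y, mu.-integrable Z (fun z => (r z y)%:E).
  case=> r0 rm rint y.
  have mS : measurable_fun (Z : set (feat R d)) (fun z : feat R d => \sum_(y : Y) r z y) by apply: measurable_sum.
  apply: (le_integrable Zmeas (g := fun z => (\sum_(y : Y) r z y)%:E)).
  - exact/measurable_EFinP.
  - move=> z Zz /=.
    rewrite lee_fin !ger0_norm ?sumr_ge0 //.
    by rewrite (bigD1 y) //= lerDl sumr_ge0.
  - apply/integrableP; split; first exact/measurable_EFinP.
    rewrite (eq_integral (fun z => (\sum_(y : Y) r z y)%:E)); last first.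
      by move=> z _; rewrite gee0_abs // lee_fin sumr_ge0.
    by rewrite rint ltry.
have intM (r : feat R d -> Y -> R) (phi : 'rV[R]_d -> Y -> R) : is_density mu Z r ->
    lip1 lab Z phi -> forall y, mu.-integrable Z (fun z => (phi z y * r z y)%:E).
  move=> hr Hphi y.
  have Hf : forall z1 z2 (c : R), Z z1 -> Z z2 -> 0 <= c ->
      (forall i, `|z1 ord0 i - z2 ord0 i| <= c) -> `|phi z1 y - phi z2 y| <= d.+1%:R * c.
    move=> z1 z2 c Z1 Z2 c0 H; apply: le_trans (Hphi z1 z2 y y Z1 Z2) _.
    exact: eucl_le.
  have [M HM] := lip_bnd _ _ _ Zcpt _ Hf.
  have mf := lip_meas _ _ _ Zmeas _ Hf.
  have bh : [bounded phi z y | z in (Z : set (feat R d))].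
    exists M; split; first exact: num_real.
    move=> N HN z Zz; exact: (le_trans (HM z Zz) (ltW HN)).
  have := integrableMl Zmeas (intd r hr y) mf bh.
  apply: eq_integrable => // z _ /=.
  by rewrite EFinM muleC.
rewrite /W1; apply: ge_ereal_sup => _ [phi Hphi <-].
have eJ r : is_density mu Z r ->
    Ejoint mu Z r phi = (\sum_(y : Y) \int[mu]_(z in Z) (phi z y * r z y)%:E)%E.
  move=> hr; rewrite /Ejoint.
  under eq_integral do rewrite -sumEFin.
  rewrite integral_sum //; move=> y; exact: intM.
have fK r : is_density mu Z r -> forall y,
    (\int[mu]_(z in Z) (phi z y * r z y)%:E)%E
    = (fine (\int[mu]_(z in Z) (phi z y * r z y)%:E))%:E.
  move=> hr y; rewrite fineK //; apply: integrable_fin_num => //; exact: intM.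
have cE r : is_density mu Z r -> forall y z,
    phi z y * cond r y z * marg r z = phi z y * r z y.
  case=> r0 _ _ y z; rewrite /cond.
  have [m0|m0] := eqVneq (marg r z) 0.
    have -> : r z y = 0 by apply: (psumr_eq0P (fun i _ => r0 z i) m0).
    by rewrite m0 !mulr0.
  by rewrite -mulrA divfK.
rewrite (eJ p hp) (eJ q hq).
rewrite (eq_bigr _ (fun y _ => fK p hp y)) (eq_bigr _ (fun y _ => fK q hq y)).
rewrite !sumEFin -EFinB -sumrB -sumEFin.
apply: lee_sum => y _.
rewrite EFinB -(fK p hp) -(fK q hq).
apply: ereal_sup_ubound; exists phi => //.
rewrite /Emarg; congr (_ - _)%E; apply: eq_integral => z _; congr EFin.
  exact: cE.
exact: cE.
Qed.
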